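(* Let $\tau>0$, $\varepsilon\ne0$, $\kappa_{12}\in\mathbb R$. The system on $T^*S^2=\{(\gamma,p)\in\mathbb R^6:\langle\gamma,\gamma\rangle=1,\langle\gamma,p\rangle=0\}$ $$\dot\gamma_1=\tfrac{\varepsilon^2}\tau p_1,\ \dot\gamma_2=\tfrac{\varepsilon^2}\tau p_2,\ \dot\gamma_3=\tfrac{\varepsilon^2}\tau p_3,\quad \dot p_1=\tfrac1\tau\kappa_{12}p_2+\mu\gamma_1,\ \dot p_2=-\tfrac1\tau\kappa_{12}p_1+\mu\gamma_2,\ \dot p_3=\mu\gamma_3,$$ $$\mu=\frac{\kappa_{12}}\tau(p_1\gamma_2-p_2\gamma_1)-\frac{\varepsilon^2}\tau(p_1^2+p_2^2+p_3^2),$$ which is Hamiltonian with Hamiltonian $h=\frac{\varepsilon^2}{2\tau}(p_1^2+p_2^2+p_3^2)$ with respect to the symplectic form $\big(\sum_{i=1}^3dp_i\wedge d\gamma_i+\frac{\kappa_{12}}{\varepsilon^2}d\gamma_1\wedge d\gamma_2\big)|_{T^*S^2}$, is Liouville integrable on $T^*S^2$ with the first integrals $h$ and $$\Phi(\gamma,p)=\gamma_1p_2-\gamma_2p_1+\frac{\kappa_{12}}{2\varepsilon^2}(\gamma_1^2+\gamma_2^2).$$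
   Context: This is the reduced system of the three-dimensional Demchenko case without twisting: a balanced ball with gyroscope, whose inertia operator is proportional to the identity, rolling without slipping and twisting over a fixed sphere, with gyroscopic matrix $\kappa=\kappa_{12}\mathbf e_1\wedge\mathbf e_2$ and $\varepsilon=b/(b\pm a)$. *)

(* Defs.v *)
From Stdlib Require Import Reals.
From Coquelicot Require Import Coquelicot.
Open Scope R_scope.

(* A point (gamma, p) of R^6 (also used for tangent vectors). *)
Record st : Type := St { g1 : R; g2 : R; g3 : R; p1 : R; p2 : R; p3 : R }.

Definition st_add (x y : st) : st :=
  St (g1 x + g1 y) (g2 x + g2 y) (g3 x + g3 y)
     (p1 x + p1 y) (p2 x + p2 y) (p3 x + p3 y).
Definition st_scal (t : R) (x : st) : st :=
  St (t * g1 x) (t * g2 x) (t * g3 x) (t * p1 x) (t * p2 x) (t * p3 x).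
Definition st_zero : st := St 0 0 0 0 0 0.

Definition st_dist2 (x y : st) : R :=
  (g1 x - g1 y)^2 + (g2 x - g2 y)^2 + (g3 x - g3 y)^2 +
  (p1 x - p1 y)^2 + (p2 x - p2 y)^2 + (p3 x - p3 y)^2.

Definition onM (x : st) : Prop :=
  g1 x ^ 2 + g2 x ^ 2 + g3 x ^ 2 = 1 /\
  g1 x * p1 x + g2 x * p2 x + g3 x * p3 x = 0.

(* tangent space of T^*S^2 at x (kernel of the differentials of the constraints) *)
Definition tangent (x v : st) : Prop :=
  g1 x * g1 v + g2 x * g2 v + g3 x * g3 v = 0 /\
  g1 v * p1 x + g2 v * p2 x + g3 v * p3 x +
  g1 x * p1 v + g2 x * p2 v + g3 x * p3 v = 0.

Definition mu (tau eps k : R) (x : st) : R :=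
  k / tau * (p1 x * g2 x - p2 x * g1 x)
  - eps ^ 2 / tau * (p1 x ^ 2 + p2 x ^ 2 + p3 x ^ 2).

Definition vf (tau eps k : R) (x : st) : st :=
  St (eps ^ 2 / tau * p1 x) (eps ^ 2 / tau * p2 x) (eps ^ 2 / tau * p3 x)
     (1 / tau * k * p2 x + mu tau eps k x * g1 x)
     (- (1 / tau) * k * p1 x + mu tau eps k x * g2 x)
     (mu tau eps k x * g3 x).

Definition ham (tau eps : R) (x : st) : R :=
  eps ^ 2 / (2 * tau) * (p1 x ^ 2 + p2 x ^ 2 + p3 x ^ 2).
Definition Phi (eps k : R) (x : st) : R :=
  g1 x * p2 x - g2 x * p1 x + k / (2 * eps ^ 2) * (g1 x ^ 2 + g2 x ^ 2).

(* omega = sum_i dp_i /\ dgamma_i + (k/eps^2) dgamma_1 /\ dgamma_2,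
   with (a /\ b)(v,w) = a(v) b(w) - a(w) b(v). *)
Definition omega (eps k : R) (v w : st) : R :=
  (p1 v * g1 w - p1 w * g1 v) + (p2 v * g2 w - p2 w * g2 v)
  + (p3 v * g3 w - p3 w * g3 v)
  + k / eps ^ 2 * (g1 v * g2 w - g1 w * g2 v).

(* df_x(v) = l, as the derivative at 0 of t |-> f(x + t v) *)
Definition dd (f : st -> R) (x v : st) (l : R) : Prop :=
  is_derive (fun t => f (st_add x (st_scal t v))) 0 l.

(* Main.v *)
Require Import Defs.
From Stdlib Require Import Reals Lra Psatz.
From Coquelicot Require Import Coquelicot.
Open Scope R_scope.

Lemma dd_ham tau eps x v : tau <> 0 ->
  dd (ham tau eps) x v (eps^2/tau*(p1 x*p1 v+p2 x*p2 v+p3 x*p3 v)).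
Proof. intros. destruct x, v; unfold dd, ham, st_add, st_scal; simpl.
auto_derive; [exact I| field; auto]. Qed.

Lemma dd_Phi eps k x v : eps <> 0 ->
  dd (Phi eps k) x v (g1 v * p2 x + g1 x * p2 v - g2 v * p1 x - g2 x * p1 v
     + k/eps^2*(g1 x * g1 v + g2 x * g2 v)).
Proof. intros. destruct x, v; unfold dd, Phi, st_add, st_scal; simpl.
auto_derive; [exact I| field; auto]. Qed.

Lemma dd_unique f x v l1 l2 : dd f x v l1 -> dd f x v l2 -> l1 = l2.
Proof. unfold dd. intros H1 H2. apply is_derive_unique in H1.
apply is_derive_unique in H2. congruence. Qed.

Lemma cross_zero (g1 g2 g3 w1 w2 w3 : R): g1^2+g2^2+g3^2 = 1 ->
  g1*w1+g2*w2+g3*w3 = 0 -> g3*w2 - g2*w3 = 0 -> g1*w3 - g3*w1 = 0 ->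
  g2*w1 - g1*w2 = 0 -> w1=0/\w2=0/\w3=0.
Proof. intros H0 H1 H2 H3 H4. split; [|split].
- assert (E : w1*(g1^2+g2^2+g3^2) = g1*(g1*w1+g2*w2+g3*w3) + g2*(g2*w1-g1*w2) - g3*(g1*w3-g3*w1)) by ring.
  rewrite H0, H1, H3, H4 in E. lra.
- assert (E : w2*(g1^2+g2^2+g3^2) = g2*(g1*w1+g2*w2+g3*w3) + g3*(g3*w2-g2*w3) - g1*(g2*w1-g1*w2)) by ring.
  rewrite H0, H1, H2, H4 in E. lra.
- assert (E : w3*(g1^2+g2^2+g3^2) = g3*(g1*w1+g2*w2+g3*w3) + g1*(g1*w3-g3*w1) - g2*(g3*w2-g2*w3)) by ring.
  rewrite H0, H1, H2, H3 in E. lra.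
Qed.

Lemma goodA tau eps k y : 0 < tau -> eps <> 0 -> onM y -> p3 y <> 0 ->
  exists v w a b c d, tangent y v /\ tangent y w /\
         dd (ham tau eps) y v a /\ dd (ham tau eps) y w b /\
         dd (Phi eps k) y v c /\ dd (Phi eps k) y w d /\
         a * d - b * c <> 0.
Proof.
intros Ht He [Hg Hgp] Hp3.
set (v := St 0 0 0 (p1 y) (p2 y) (p3 y)).
set (w := St 0 0 0 (g2 y * p3 y - g3 y * p2 y) (g3 y * p1 y - g1 y * p3 y)
              (g1 y * p2 y - g2 y * p1 y)).
exists v, w; do 4 eexists. split; [|split; [|split; [apply dd_ham; lra|split;[apply dd_ham; lra|
  split; [apply dd_Phi; auto| split; [apply dd_Phi; auto|]]]]]].
- unfold tangent, v; simpl. split; lra.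
- unfold tangent, w; simpl. split; [lra| ring].
- destruct y as [a1 a2 a3 b1 b2 b3]; unfold v, w; cbn [g1 g2 g3 p1 p2 p3] in *.
  assert (E: forall c:R, c * (0 * b2 + a1 * (a3 * b1 - a1 * b3) - 0 * b1 - a2 * (a2 * b3 - a3 * b2) +
        k / eps ^ 2 * (a1 * 0 + a2 * 0)) = c * (a3*(a1*b1+a2*b2+a3*b3) - (a1^2+a2^2+a3^2)*b3)).
  { intros; field; auto. }
  rewrite E, Hg, Hgp.
  assert (E2: b1 * (a2 * b3 - a3 * b2) + b2 * (a3 * b1 - a1 * b3) + b3 * (a1 * b2 - a2 * b1) = 0) by ring.
  rewrite E2.
  assert (0 < eps^2) by (apply pow2_gt_0; auto).
  assert (0 < b1*b1+b2*b2+b3*b3) by nra.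
  assert (0 < eps^2/tau) by (apply Rdiv_lt_0_compat; lra).
  intro HH. 
  assert (eps ^ 2 / tau * (b1 * b1 + b2 * b2 + b3 * b3) * b3 = 0) by lra.
  apply Rmult_integral in H2. destruct H2 as [H2|H2]; [|lra].
  apply Rmult_integral in H2. lra.
Qed.

Lemma goodB tau eps k y : 0 < tau -> eps <> 0 -> onM y -> g1 y = 0 -> g2 y = 0 ->
  p1 y ^2 + p2 y ^2 <> 0 ->
  exists v w a b c d, tangent y v /\ tangent y w /\
         dd (ham tau eps) y v a /\ dd (ham tau eps) y w b /\
         dd (Phi eps k) y v c /\ dd (Phi eps k) y w d /\
         a * d - b * c <> 0.
Proof.
intros Ht He [Hg Hgp] H1 H2 Hp.
set (v := St 0 0 0 (p1 y) (p2 y) 0).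
set (w := St (p2 y) (- p1 y) 0 0 0 0).
exists v, w; do 4 eexists. split; [|split; [|split; [apply dd_ham; lra|split;[apply dd_ham; lra|
  split; [apply dd_Phi; auto| split; [apply dd_Phi; auto|]]]]]].
- unfold tangent, v; simpl. rewrite H1, H2 in *. split; lra.
- unfold tangent, w; simpl. rewrite H1, H2. split; [lra| ring].
- destruct y as [a1 a2 a3 b1 b2 b3]; unfold v, w; cbn [g1 g2 g3 p1 p2 p3] in *. subst.
  assert (0 < eps^2) by (apply pow2_gt_0; auto).
  assert (0 < eps^2/tau) by (apply Rdiv_lt_0_compat; lra).
  assert (0 < b1^2+b2^2) by nra.
  assert (E: eps ^ 2 / tau * (b1 * b1 + b2 * b2 + b3 * 0) *
    (b2 * b2 + 0 * 0 - - b1 * b1 - 0 * 0 + k / eps ^ 2 * (0 * b2 + 0 * - b1)) -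
    eps ^ 2 / tau * (b1 * 0 + b2 * 0 + b3 * 0) *
    (0 * b2 + 0 * b2 - 0 * b1 - 0 * b1 + k / eps ^ 2 * (0 * 0 + 0 * 0))
    = eps^2/tau * ((b1^2+b2^2)*(b1^2+b2^2))) by (field; split; lra || auto).
  rewrite E. apply Rgt_not_eq. apply Rmult_lt_0_compat; nra.
Qed.

Theorem theorem9p3 (tau eps k : R) (Htau : 0 < tau) (Heps : eps <> 0) :
  (forall x, onM x -> tangent x (vf tau eps k x)) /\
  (forall x, onM x -> forall w, tangent x w ->
     (forall v, tangent x v -> omega eps k v w = 0) -> w = st_zero) /\
  (forall x, onM x -> forall v, tangent x v ->
     dd (ham tau eps) x v (omega eps k v (vf tau eps k x))) /\
  (forall x, onM x ->
     dd (ham tau eps) x (vf tau eps k x) 0 /\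
     dd (Phi eps k) x (vf tau eps k x) 0) /\
  (forall x, onM x -> forall Y, tangent x Y ->
     (forall v, tangent x v -> dd (Phi eps k) x v (omega eps k v Y)) ->
     omega eps k (vf tau eps k x) Y = 0) /\
  (forall x, onM x -> forall e, 0 < e ->
     exists y, onM y /\ st_dist2 x y < e /\
       exists v w a b c d, tangent y v /\ tangent y w /\
         dd (ham tau eps) y v a /\ dd (ham tau eps) y w b /\
         dd (Phi eps k) y v c /\ dd (Phi eps k) y w d /\
         a * d - b * c <> 0).
Proof.
assert (Ht0 : tau <> 0) by lra.
assert (P1 : forall x, onM x -> tangent x (vf tau eps k x)).
{ intros [a1 a2 a3 b1 b2 b3] [Hg Hgp]; unfold tangent, vf, mu; cbn [g1 g2 g3 p1 p2 p3] in *.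
  split.
  - assert (E: a1 * (eps ^ 2 / tau * b1) + a2 * (eps ^ 2 / tau * b2) + a3 * (eps ^ 2 / tau * b3)
      = eps^2/tau * (a1*b1+a2*b2+a3*b3)) by ring. rewrite E, Hgp. ring.
  - match goal with |- ?L = 0 => assert (E : L = eps^2/tau * (b1^2+b2^2+b3^2) * (1 - (a1^2+a2^2+a3^2))
       + k/tau * (b1*a2 - b2*a1) * ((a1^2+a2^2+a3^2) - 1)) by (field; auto) end.
    rewrite E, Hg. ring. }
assert (P3 : forall x, onM x -> forall v, tangent x v ->
     dd (ham tau eps) x v (omega eps k v (vf tau eps k x))).
{ intros x Hx v Hv.
  replace (omega eps k v (vf tau eps k x)) with
    (eps^2/tau*(p1 x*p1 v+p2 x*p2 v+p3 x*p3 v)) by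
  (destruct x as [a1 a2 a3 b1 b2 b3], v as [c1 c2 c3 d1 d2 d3], Hv as [Hv1 Hv2];
   unfold omega, vf, mu; cbn [g1 g2 g3 p1 p2 p3] in *;
   match goal with |- _ = ?R => assert (E : R = eps^2/tau*(b1*d1+b2*d2+b3*d3)
     - (k/tau*(b1*a2-b2*a1) - eps^2/tau*(b1^2+b2^2+b3^2)) * (a1*c1+a2*c2+a3*c3)) by (field; auto) end;
   rewrite E, Hv1; ring).
  apply dd_ham; auto. }
assert (P4 : forall x, onM x ->
     dd (ham tau eps) x (vf tau eps k x) 0 /\
     dd (Phi eps k) x (vf tau eps k x) 0).
{ intros x Hx. split.
  - pose proof (dd_ham tau eps x (vf tau eps k x) Ht0) as H.
    match type of H with dd _ _ _ ?L => replace 0 with L; [exact H|] end.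
    destruct x as [a1 a2 a3 b1 b2 b3], Hx as [Hg Hgp]; unfold vf, mu; cbn [g1 g2 g3 p1 p2 p3] in *.
    match goal with |- ?L = 0 => assert (E : L = eps^2/tau * ((k/tau*(b1*a2-b2*a1) - eps^2/tau*(b1^2+b2^2+b3^2)) * (a1*b1+a2*b2+a3*b3))) by (field; auto) end.
    rewrite E, Hgp. ring.
  - pose proof (dd_Phi eps k x (vf tau eps k x) Heps) as H.
    match type of H with dd _ _ _ ?L => replace 0 with L; [exact H|] end.
    destruct x as [a1 a2 a3 b1 b2 b3], Hx as [Hg Hgp]; unfold vf, mu; cbn [g1 g2 g3 p1 p2 p3] in *.
    field; auto. }
split; [exact P1|]. split; [|split; [exact P3|split; [exact P4|split]]].
- intros [a1 a2 a3 b1 b2 b3] [Hg Hgp] [c1 c2 c3 d1 d2 d3] [Hw1 Hw2] H.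
  unfold tangent, omega in *; cbn [g1 g2 g3 p1 p2 p3] in *.
  assert (Hc : c1 = 0 /\ c2 = 0 /\ c3 = 0).
  { apply (cross_zero a1 a2 a3); auto.
    - specialize (H (St 0 0 0 0 a3 (-a2))); cbn [g1 g2 g3 p1 p2 p3] in H.
      rewrite <- H; [field; auto| split; lra].
    - specialize (H (St 0 0 0 (-a3) 0 a1)); cbn [g1 g2 g3 p1 p2 p3] in H.
      rewrite <- H; [field; auto| split; lra].
    - specialize (H (St 0 0 0 a2 (-a1) 0)); cbn [g1 g2 g3 p1 p2 p3] in H.
      rewrite <- H; [field; auto| split; lra]. }
  destruct Hc as [-> [-> ->]].
  assert (Hd : d1 = 0 /\ d2 = 0 /\ d3 = 0).
  { apply (cross_zero a1 a2 a3); auto.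
    - lra.
    - set (s := 0*b1 + a3*b2 - a2*b3).
      specialize (H (St 0 a3 (-a2) (-s*a1) (-s*a2) (-s*a3))); cbn [g1 g2 g3 p1 p2 p3] in H.
      assert (Ht : a1 * 0 + a2 * a3 + a3 * - a2 = 0 /\
        0 * b1 + a3 * b2 + - a2 * b3 + a1 * (- s * a1) + a2 * (- s * a2) + a3 * (- s * a3) = 0).
      { split; [ring|]. 
        assert (E : 0 * b1 + a3 * b2 + - a2 * b3 + a1 * (- s * a1) + a2 * (- s * a2) + a3 * (- s * a3)
          = s * (1 - (a1^2+a2^2+a3^2))) by (unfold s; ring). rewrite E, Hg; ring. }
      specialize (H Ht). match goal with |- ?X = 0 => cut (-X = 0); [lra|] end. rewrite <- H. field; auto.
    - set (s := -a3*b1 + 0*b2 + a1*b3).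
      specialize (H (St (-a3) 0 a1 (-s*a1) (-s*a2) (-s*a3))); cbn [g1 g2 g3 p1 p2 p3] in H.
      assert (Ht : a1 * - a3 + a2 * 0 + a3 * a1 = 0 /\
        - a3 * b1 + 0 * b2 + a1 * b3 + a1 * (- s * a1) + a2 * (- s * a2) + a3 * (- s * a3) = 0).
      { split; [ring|]. 
        assert (E : - a3 * b1 + 0 * b2 + a1 * b3 + a1 * (- s * a1) + a2 * (- s * a2) + a3 * (- s * a3)
          = s * (1 - (a1^2+a2^2+a3^2))) by (unfold s; ring). rewrite E, Hg; ring. }
      specialize (H Ht). match goal with |- ?X = 0 => cut (-X = 0); [lra|] end. rewrite <- H. field; auto.
    - set (s := a2*b1 - a1*b2 + 0*b3).
      specialize (H (St a2 (-a1) 0 (-s*a1) (-s*a2) (-s*a3))); cbn [g1 g2 g3 p1 p2 p3] in H.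
      assert (Ht : a1 * a2 + a2 * - a1 + a3 * 0 = 0 /\
        a2 * b1 + - a1 * b2 + 0 * b3 + a1 * (- s * a1) + a2 * (- s * a2) + a3 * (- s * a3) = 0).
      { split; [ring|]. 
        assert (E : a2 * b1 + - a1 * b2 + 0 * b3 + a1 * (- s * a1) + a2 * (- s * a2) + a3 * (- s * a3)
          = s * (1 - (a1^2+a2^2+a3^2))) by (unfold s; ring). rewrite E, Hg; ring. }
      specialize (H Ht). match goal with |- ?X = 0 => cut (-X = 0); [lra|] end. rewrite <- H. field; auto. }
  destruct Hd as [-> [-> ->]]. reflexivity.
- intros x Hx Y HY H.
  specialize (H _ (P1 x Hx)).
  apply (dd_unique _ _ _ _ _ H). apply P4; auto.
- intros x Hx e He.
  destruct (Req_EM_T (p3 x) 0) as [Hp3|Hp3].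
  2: { exists x. split; [auto|split; [|apply goodA; auto]].
       unfold st_dist2. lra. }
  destruct x as [a1 a2 a3 b1 b2 b3]; destruct Hx as [Hg Hgp];
  cbn [g1 g2 g3 p1 p2 p3] in *; subst b3.
  set (s := Rmin 1 e / 2).
  assert (Hs0 : 0 < s) by (unfold s; pose proof (Rmin_pos 1 e ltac:(lra) He); lra).
  assert (Hs1 : s <= 1/2) by (unfold s; pose proof (Rmin_l 1 e); lra).
  assert (Hs2 : s < e) by (unfold s; pose proof (Rmin_r 1 e); lra).
  assert (Hse : s * s < e) by nra.
  destruct (Req_EM_T (a1^2+a2^2) 0) as [Ha|Ha].
  + assert (a1 = 0) by nra. assert (a2 = 0) by nra. subst a1 a2.
    destruct (Req_EM_T (b1^2+b2^2) 0) as [Hb|Hb].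
    * assert (b1 = 0) by nra. assert (b2 = 0) by nra. subst b1 b2.
      exists (St 0 0 a3 s 0 0). split; [split; cbn; lra|]. split.
      { unfold st_dist2; cbn [g1 g2 g3 p1 p2 p3]. nra. }
      apply goodB; [lra|auto|split; cbn; lra|reflexivity|reflexivity|cbn; nra].
    * exists (St 0 0 a3 b1 b2 0). split; [split; auto|]. split.
      { unfold st_dist2; cbn [g1 g2 g3 p1 p2 p3]. nra. }
      apply goodB; [lra|auto|split; auto|reflexivity|reflexivity|cbn; auto].
  + set (G := a1^2+a2^2).
    assert (HG : 0 < G) by (unfold G; nra).
    assert (HG1 : G <= 1) by (unfold G; nra).
    exists (St a1 a2 a3 (b1 + s*a3*a1) (b2 + s*a3*a2) (0 - s*G)).
    assert (Hy : onM (St a1 a2 a3 (b1 + s*a3*a1) (b2 + s*a3*a2) (0 - s*G))).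
    { split; cbn [g1 g2 g3 p1 p2 p3]; [exact Hg|].
      assert (E: a1 * (b1 + s * a3 * a1) + a2 * (b2 + s * a3 * a2) + a3 * (0 - s * G)
        = a1*b1+a2*b2+a3*0) by (unfold G; ring). rewrite E; exact Hgp. }
    split; [exact Hy|]. split.
    { unfold st_dist2; cbn [g1 g2 g3 p1 p2 p3].
      assert (E : (a1 - a1) ^ 2 + (a2 - a2) ^ 2 + (a3 - a3) ^ 2 + (b1 - (b1 + s * a3 * a1)) ^ 2 +
        (b2 - (b2 + s * a3 * a2)) ^ 2 + (0 - (0 - s * G)) ^ 2 = s*s*G*(a1^2+a2^2+a3^2))
        by (unfold G; ring).
      rewrite E, Hg. nra. }
    apply goodA; auto. cbn. nra.
Qed.
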